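(* Let $G$ be a quasi-semi-simple group, $H$ a Hausdorff topological group, and $\phi:G\to H$ a continuous injective homomorphism. Then $\phi(G)$ is closed in $H$ and $\phi:G\to\phi(G)$ is a homeomorphism (with $\phi(G)$ carrying the subspace topology).
   Context: A locally compact group $G$ is quasi-semi-simple (qss) if there is a closed subgroup $A<G$ such that (i) $G=CAC$ for some compact $C\subset G$; (ii) for every net $(a_\alpha)$ in $A$ converging to infinity there is a subnet $(a_\beta)$ such that $U^{(a_\beta)}_+$ is not precompact and the subgroup generated by $U^{(a_\beta)}_+,U^{(a_\beta)}_-,U^{(a_\beta)}_0$ is dense in $G$, where for a net $(g_\alpha)$: $U^{(g_\alpha)}_+=\{x: g_\alpha^{-1}xg_\alpha\to e\}$, $U^{(g_\alpha)}_-=\{x: g_\alpha xg_\alpha^{-1}\to e\}$, and $U^{(g_\alpha)}_0$ is the set of $x$ such that every subnet of each of the nets $(g_\alpha^{-1}xg_\alpha)$, $(g_\alpha xg_\alpha^{-1})$ admits a converging subnet. *)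

(* Defs.v *)
From Stdlib Require Import List.

Record TopGroup := {
  tg_car :> Type;
  tg_mul : tg_car -> tg_car -> tg_car;
  tg_inv : tg_car -> tg_car;
  tg_one : tg_car;
  tg_open : (tg_car -> Prop) -> Prop;
  tg_mulA : forall x y z, tg_mul x (tg_mul y z) = tg_mul (tg_mul x y) z;
  tg_mul1g : forall x, tg_mul tg_one x = x;
  tg_mulVg : forall x, tg_mul (tg_inv x) x = tg_one;
  tg_open_full : tg_open (fun _ => True);
  tg_open_inter : forall U V, tg_open U -> tg_open V -> tg_open (fun x => U x /\ V x);
  tg_open_union : forall F : (tg_car -> Prop) -> Prop,
      (forall U, F U -> tg_open U) -> tg_open (fun x => exists U, F U /\ U x);
  tg_mul_cont : forall U x y, tg_open U -> U (tg_mul x y) ->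
      exists V W, tg_open V /\ tg_open W /\ V x /\ W y /\
        (forall a b, V a -> W b -> U (tg_mul a b));
  tg_inv_cont : forall U, tg_open U -> tg_open (fun x => U (tg_inv x))
}.

Arguments tg_mul {_}.
Arguments tg_inv {_}.
Arguments tg_one {_}.
Arguments tg_open {_}.

Section Topo.
Variable G : TopGroup.

Definition closed (S : G -> Prop) : Prop := tg_open (fun x => ~ S x).

Definition closure (S : G -> Prop) : G -> Prop :=
  fun x => forall U, tg_open U -> U x -> exists y, U y /\ S y.

Definition compact (K : G -> Prop) : Prop :=
  forall F : (G -> Prop) -> Prop,
    (forall U, F U -> tg_open U) ->
    (forall x, K x -> exists U, F U /\ U x) ->
    exists l : list (G -> Prop), (forall U, In U l -> F U) /\
      (forall x, K x -> exists U, In U l /\ U x).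

Definition precompact (S : G -> Prop) : Prop := compact (closure S).

Definition hausdorff : Prop :=
  forall x y : G, x <> y -> exists U V, tg_open U /\ tg_open V /\ U x /\ V y /\
    (forall z, U z -> V z -> False).

Definition locally_compact : Prop :=
  forall x : G, exists U K, tg_open U /\ U x /\ compact K /\ (forall y, U y -> K y).

Definition LCGroup : Prop := hausdorff /\ locally_compact.

Definition subgroup (S : G -> Prop) : Prop :=
  S tg_one /\ (forall x y, S x -> S y -> S (tg_mul x y)) /\ (forall x, S x -> S (tg_inv x)).

Definition generated (T : G -> Prop) : G -> Prop :=
  fun x => forall S, subgroup S -> (forall y, T y -> S y) -> S x.

Definition dense (S : G -> Prop) : Prop := forall x, closure S x.

Definition directed {D : Type} (le : D -> D -> Prop) : Prop :=
  inhabited D /\ (forall d, le d d) /\ (forall a b c, le a b -> le b c -> le a c) /\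
  (forall a b, exists c, le a c /\ le b c).

Definition net_conv {D : Type} (le : D -> D -> Prop) (a : D -> G) (x : G) : Prop :=
  forall U, tg_open U -> U x -> exists d0, forall d, le d0 d -> U (a d).

Definition net_to_infty {D : Type} (le : D -> D -> Prop) (a : D -> G) : Prop :=
  forall K, compact K -> exists d0, forall d, le d0 d -> ~ K (a d).

(* b (indexed by D') is a subnet of a (indexed by D), in the sense of Willard *)
Definition subnet {D D' : Type} (le : D -> D -> Prop) (le' : D' -> D' -> Prop)
  (a : D -> G) (b : D' -> G) : Prop :=
  exists h : D' -> D,
    (forall d, exists d0', forall d', le' d0' d' -> le d (h d')) /\
    (forall d', b d' = a (h d')).

Definition has_conv_subnet {D : Type} (le : D -> D -> Prop) (a : D -> G) : Prop :=
  exists (D' : Type) (le' : D' -> D' -> Prop) (b : D' -> G),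
    directed le' /\ subnet le le' a b /\ exists y, net_conv le' b y.

Definition every_subnet_has_conv_subnet {D : Type} (le : D -> D -> Prop) (a : D -> G) : Prop :=
  forall (D' : Type) (le' : D' -> D' -> Prop) (b : D' -> G),
    directed le' -> subnet le le' a b -> has_conv_subnet le' b.

Definition Uplus {D : Type} (le : D -> D -> Prop) (g : D -> G) : G -> Prop :=
  fun x => net_conv le (fun d => tg_mul (tg_mul (tg_inv (g d)) x) (g d)) tg_one.

Definition Uminus {D : Type} (le : D -> D -> Prop) (g : D -> G) : G -> Prop :=
  fun x => net_conv le (fun d => tg_mul (tg_mul (g d) x) (tg_inv (g d))) tg_one.

Definition Uzero {D : Type} (le : D -> D -> Prop) (g : D -> G) : G -> Prop :=
  fun x =>
    every_subnet_has_conv_subnet le (fun d => tg_mul (tg_mul (tg_inv (g d)) x) (g d)) /\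
    every_subnet_has_conv_subnet le (fun d => tg_mul (tg_mul (g d) x) (tg_inv (g d))).

Definition qss : Prop :=
  LCGroup /\
  exists A : G -> Prop, subgroup A /\ closed A /\
  exists C : G -> Prop, compact C /\
    (forall g, exists c1 a c2, C c1 /\ A a /\ C c2 /\ g = tg_mul (tg_mul c1 a) c2) /\
    (forall (D : Type) (le : D -> D -> Prop) (a : D -> G),
        directed le -> (forall d, A (a d)) -> net_to_infty le a ->
        exists (D' : Type) (le' : D' -> D' -> Prop) (b : D' -> G),
          directed le' /\ subnet le le' a b /\
          ~ precompact (Uplus le' b) /\
          dense (generated (fun x => Uplus le' b x \/ Uminus le' b x \/ Uzero le' b x))).

End Topo.

Arguments closed {G}.
Arguments compact {G}.

Definition continuous {G H : TopGroup} (f : G -> H) : Prop :=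
  forall V, tg_open V -> tg_open (fun x => V (f x)).

Definition group_hom {G H : TopGroup} (f : G -> H) : Prop :=
  forall x y, f (tg_mul x y) = tg_mul (f x) (f y).

(* Main.v *)
Require Import Defs.
From Stdlib Require Import List Classical FunctionalExtensionality PropExtensionality.

Lemma mulgV (X : TopGroup) (x : X) : tg_mul x (tg_inv x) = tg_one.
Proof.
  rewrite <- (tg_mul1g X (tg_mul x (tg_inv x))).
  rewrite <- (tg_mulVg X (tg_inv x)) at 1.
  rewrite <- tg_mulA. rewrite (tg_mulA X (tg_inv x) x (tg_inv x)).
  rewrite (tg_mulVg X x), tg_mul1g. apply tg_mulVg.
Qed.

Lemma mulg1 (X : TopGroup) (x : X) : tg_mul x tg_one = x.
Proof. rewrite <- (tg_mulVg X x), tg_mulA, mulgV. apply tg_mul1g. Qed.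

Lemma mulKg (X : TopGroup) (x y : X) : tg_mul (tg_inv x) (tg_mul x y) = y.
Proof. rewrite tg_mulA, tg_mulVg. apply tg_mul1g. Qed.

Lemma mulVKg (X : TopGroup) (x y : X) : tg_mul x (tg_mul (tg_inv x) y) = y.
Proof. rewrite tg_mulA, mulgV. apply tg_mul1g. Qed.

Ltac gsimpl := repeat (rewrite <- tg_mulA || rewrite mulKg || rewrite mulVKg
  || rewrite tg_mulVg || rewrite mulgV || rewrite tg_mul1g || rewrite mulg1).

Lemma hom_one (G H : TopGroup) (phi : G -> H) : group_hom phi -> phi tg_one = tg_one.
Proof.
  intro Hh. assert (E : phi tg_one = tg_mul (phi tg_one) (phi tg_one)).
  { rewrite <- Hh, tg_mul1g. reflexivity. }
  rewrite <- (mulKg H (phi tg_one) (phi tg_one)) at 1. rewrite <- E. apply tg_mulVg.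
Qed.

Lemma hom_inv (G H : TopGroup) (phi : G -> H) (x : G) : group_hom phi -> phi (tg_inv x) = tg_inv (phi x).
Proof.
  intro Hh. rewrite <- (mulg1 H (phi (tg_inv x))), <- (mulgV H (phi x)), tg_mulA, <- Hh,
    tg_mulVg, (hom_one G H phi Hh). apply tg_mul1g.
Qed.

Lemma conj_one (X : TopGroup) (t v : X) : tg_mul (tg_mul (tg_inv t) v) t = tg_one -> v = tg_one.
Proof.
  intro E. assert (E2 : v = tg_mul (tg_mul t (tg_mul (tg_mul (tg_inv t) v) t)) (tg_inv t)) by (gsimpl; reflexivity).
  rewrite E2, E, mulg1. apply mulgV.
Qed.

Lemma list_choice (X Y : Type) (Good : Y -> Prop) (Pr : X -> Y -> Prop) (l : list X) :
  (forall x, In x l -> exists y, Good y /\ Pr x y) ->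
  exists L, (forall y, In y L -> Good y) /\ forall x, In x l -> exists y, In y L /\ Pr x y.
Proof.
  induction l as [|x l IH]; intro H.
  - exists nil. split; intros ? [].
  - destruct (H x (or_introl eq_refl)) as [y [Gy Py]].
    destruct IH as [L [HL1 HL2]]. { intros x' Hx'; apply H; right; exact Hx'. }
    exists (y :: L). split.
    + intros y' [<-|Hy']; auto.
    + intros x' [<-|Hx']. { exists y; split; [left; reflexivity| exact Py]. }
      destruct (HL2 x' Hx') as [y' [? ?]]. exists y'; split; [right|]; auto.
Qed.

Lemma compact_empty (G : TopGroup) : compact (fun _ : G => False).
Proof. intros F _ _. exists nil. split; [intros ? []| intros ? []]. Qed.

Lemma compact_union (G : TopGroup) (K1 K2 : G -> Prop) : compact K1 -> compact K2 -> compact (fun x => K1 x \/ K2 x).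
Proof.
  intros H1 H2 F HF Hc. destruct (H1 F HF) as [l1 [A1 B1]]. { intros x Kx; apply Hc; left; exact Kx. }
  destruct (H2 F HF) as [l2 [A2 B2]]. { intros x Kx; apply Hc; right; exact Kx. }
  exists (l1 ++ l2). split.
  - intros U HU. apply in_app_iff in HU. destruct HU; auto.
  - intros x [Kx|Kx]; [destruct (B1 x Kx) as [U [? ?]]|destruct (B2 x Kx) as [U [? ?]]];
      exists U; rewrite in_app_iff; auto.
Qed.

Lemma compact_prod (G : TopGroup) (K1 K2 : G -> Prop) : compact K1 -> compact K2 ->
  compact (fun z => exists a b, K1 a /\ K2 b /\ z = tg_mul a b).
Proof.
 intros H1 H2 F HF Hc.
 set (F1 := fun V0 : G -> Prop => tg_open V0 /\ exists L : list (G->Prop), (forall U, In U L -> F U) /\ forall s t, V0 s -> K2 t -> exists U, In U L /\ U (tg_mul s t)).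
 destruct (H1 F1) as [l1 [Hl1 Hcov1]].
 - intros V [HV _]; exact HV.
 - intros a Ka.
   set (F2 := fun W : G -> Prop => tg_open W /\ exists V U, tg_open V /\ V a /\ F U /\ forall s t, V s -> W t -> U (tg_mul s t)).
   destruct (H2 F2) as [l2 [Hl2 Hcov2]].
   + intros W [HW _]; exact HW.
   + intros b Kb. destruct (Hc (tg_mul a b)) as [U [FU Uab]]. { exists a, b; auto. }
     destruct (tg_mul_cont G U a b (HF U FU) Uab) as [V [W [HV [HW [Va [Wb Hvw]]]]]].
     exists W. split; [|exact Wb]. split; [exact HW|]. exists V, U. auto.
   + assert (Hint : exists V0, tg_open V0 /\ V0 a /\ forall W, In W l2 -> exists U, F U /\ forall s t, V0 s -> W t -> U (tg_mul s t)).
     { clear Hcov2. induction l2 as [|W l2 IH].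
       - exists (fun _ => True). split; [apply tg_open_full|]. split; [exact I| intros W []].
       - destruct IH as [V0 [HV0 [V0a HV0l]]]. { intros W' HW'; apply Hl2; right; exact HW'. }
         destruct (Hl2 W (or_introl eq_refl)) as [_ [V [U [HV [Va [FU HU]]]]]].
         exists (fun x => V0 x /\ V x). split; [apply tg_open_inter; assumption|]. split; [split; assumption|].
         intros W' [<-|HW']. { exists U; split; [exact FU| intros s t [_ Vs] Wt; auto]. }
         destruct (HV0l W' HW') as [U' [FU' HU']]. exists U'; split; [exact FU'| intros s t [V0s _] Wt; auto]. }
     destruct Hint as [V0 [HV0 [V0a HV0l]]].
     destruct (list_choice _ _ F (fun W U => forall s t, V0 s -> W t -> U (tg_mul s t)) l2 HV0l) as [L [HL1 HL2]].
     exists V0. split; [|exact V0a]. split; [exact HV0|]. exists L. split; [exact HL1|].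
     intros s t V0s Kt. destruct (Hcov2 t Kt) as [W [HW Wt]]. destruct (HL2 W HW) as [U [HU1 HU2]]. exists U; split; auto.
 - destruct (list_choice _ _ (fun L => forall U, In U L -> F U) (fun V0 L => forall s t, V0 s -> K2 t -> exists U, In U L /\ U (tg_mul s t)) l1) as [LL [HLL1 HLL2]].
   { intros V HV. destruct (Hl1 V HV) as [_ [L [HL1 HL2]]]. exists L; auto. }
   exists (concat LL). split.
   + intros U HU. apply in_concat in HU. destruct HU as [L [HL HUL]]. exact (HLL1 L HL U HUL).
   + intros z [a [b [Ka [Kb ->]]]]. destruct (Hcov1 a Ka) as [V [HV Va]]. destruct (HLL2 V HV) as [L [HL HL']].
     destruct (HL' a b Va Kb) as [U [HU Uab]]. exists U; split; [apply in_concat; exists L; auto | exact Uab].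
Qed.

Lemma cluster (G : TopGroup) (K : G -> Prop) (Pt : Type) (valid : Pt -> Prop) (fine : Pt -> Pt -> Prop) (R : G -> Pt -> Prop) :
  compact K -> (exists p, valid p) ->
  (forall p q, valid p -> valid q -> exists r, valid r /\ fine p r /\ fine q r) ->
  (forall z p q, fine p q -> R z q -> R z p) ->
  (forall p, valid p -> exists z, K z /\ R z p) ->
  exists y, K y /\ forall N, tg_open N -> N y -> forall p, valid p -> exists z, K z /\ N z /\ R z p.
Proof.
  intros HK [p0 Hp0] Hjoin Hanti Hbase.
  apply NNPP; intro Hno.
  destruct (HK (fun N : G -> Prop => tg_open N /\ exists p, valid p /\ forall z, K z -> N z -> ~ R z p)) as [l [Hl Hcov]].
  - intros U [HU _]; exact HU.
  - intros x Kx. apply NNPP; intro Hx. apply Hno. exists x. split; [exact Kx|].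
    intros N HN Nx p Hp. apply NNPP; intro Hz. apply Hx. exists N. split; [|exact Nx].
    split; [exact HN|]. exists p. split; [exact Hp|]. intros z Kz Nz Rz. apply Hz. eauto.
  - assert (Hr : exists r, valid r /\ forall N, In N l -> forall z, K z -> N z -> ~ R z r).
    { clear Hcov. induction l as [|N l IH].
      - exists p0. split; [exact Hp0| intros N []].
      - destruct IH as [r [Hr Hrl]]. { intros U HU; apply Hl; right; exact HU. }
        destruct (Hl N (or_introl eq_refl)) as [_ [p [Hp Hpn]]].
        destruct (Hjoin p r Hp Hr) as [r' [Hr' [Hpr' Hrr']]].
        exists r'. split; [exact Hr'|]. intros N' [<-|HN'] z Kz Nz Rz.
        + apply (Hpn z Kz Nz). eapply Hanti; eauto.
        + apply (Hrl N' HN' z Kz Nz). eapply Hanti; eauto. }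
    destruct Hr as [r [Hr Hrl]]. destruct (Hbase r Hr) as [z [Kz Rz]].
    destruct (Hcov z Kz) as [N [HN Nz]]. exact (Hrl N HN z Kz Nz Rz).
Qed.

Lemma clus_eq (G H : TopGroup) (phi : G -> H) (P : G -> Prop) (z : G) (y : H) :
  hausdorff H -> continuous phi ->
  (forall N, tg_open N -> N z -> forall W, tg_open W -> W y -> exists g, P g /\ N g /\ W (phi g)) ->
  phi z = y.
Proof.
  intros HH Hc Hz. apply NNPP; intro Hne.
  destruct (HH _ _ Hne) as [U [V [HU [HV [Uz [Vy Hd]]]]]].
  destruct (Hz (fun g => U (phi g)) (Hc U HU) Uz V HV Vy) as [g [_ [Ug Vg]]].
  exact (Hd _ Ug Vg).
Qed.

Lemma key (G H : TopGroup) (phi : G -> H) : qss G -> hausdorff H -> continuous phi -> group_hom phi ->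
  (forall x y, phi x = phi y -> x = y) ->
  forall (h : H) (P : G -> Prop), (forall W, tg_open W -> W h -> exists g, P g /\ W (phi g)) ->
  exists y, forall N, tg_open N -> N y -> forall W, tg_open W -> W h -> exists g, P g /\ N g /\ W (phi g).
Proof.
 intros Hq HH Hc Hhom Hinj h P Hbad. apply NNPP; intro NoClu.
 destruct Hq as [[HG _] [A [HA [_ [C [HC [Hdec Hnet]]]]]]].
 assert (Kav : forall K, compact K -> exists W, tg_open W /\ W h /\ forall g, K g -> P g -> ~ W (phi g)).
 { intros K HK. apply NNPP; intro Hn. apply NoClu.
   destruct (cluster G K (H -> Prop) (fun W => tg_open W /\ W h) (fun W W' => forall y, W' y -> W y) (fun z W => P z /\ W (phi z)) HK) as [y [Ky Hy]].
   - exists (fun _ => True). split; [apply tg_open_full|exact I].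
   - intros W W' [? ?] [? ?]. exists (fun y => W y /\ W' y). split; [split; [apply tg_open_inter; auto| auto]|].
     split; intros ? [? ?]; auto.
   - intros z W W' Hf [Pz Wz]. split; auto.
   - intros W [HW Wh]. apply NNPP; intro Hz. apply Hn. exists W; split; [|split]; auto.
     intros g Kg Pg Wg. apply Hz. exists g; auto.
   - exists y. intros N HN Ny W HW Wh. destruct (Hy N HN Ny W (conj HW Wh)) as [z [_ [Nz [Pz Wz]]]]. exists z; auto. }
 assert (Base : forall W Kc, tg_open W -> W h -> compact Kc -> exists c1 a c2, C c1 /\ A a /\ C c2 /\ ~ Kc a /\
    P (tg_mul (tg_mul c1 a) c2) /\ W (phi (tg_mul (tg_mul c1 a) c2))).
 { intros W Kc HW Wh HKc.
   destruct (Kav _ (compact_prod G _ _ (compact_prod G _ _ HC HKc) HC)) as [W0 [HW0 [W0h HW0']]].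
   destruct (Hbad (fun y => W y /\ W0 y)) as [g [Pg [Wg W0g]]]. { apply tg_open_inter; auto. } { auto. }
   destruct (Hdec g) as [c1 [a [c2 [C1 [Aa [C2 ->]]]]]].
   exists c1, a, c2. repeat split; auto. intro Ka. apply (HW0' _ ltac:(exists (tg_mul c1 a), c2; split; [exists c1, a; auto|auto]) Pg W0g). }
 destruct (cluster G C ((H->Prop)*(G->Prop)) (fun p => tg_open (fst p) /\ fst p h /\ compact (snd p))
   (fun p q => (forall y, fst q y -> fst p y) /\ (forall x, snd p x -> snd q x))
   (fun z p => exists c1 a, C c1 /\ A a /\ ~ snd p a /\ P (tg_mul (tg_mul c1 a) z) /\ fst p (phi (tg_mul (tg_mul c1 a) z))) HC)
   as [c2s [Cc2s Hc2s]].
 - exists ((fun _ => True), (fun _ => False)). simpl. split; [apply tg_open_full|split; [exact I|apply compact_empty]].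
 - intros [W K] [W' K'] [? [? ?]] [? [? ?]]; simpl in *. exists ((fun y => W y /\ W' y), (fun x => K x \/ K' x)); simpl.
   split; [split; [apply tg_open_inter; auto| split; [auto|apply compact_union; auto]]|].
   split; split; try (intros ? [? ?]; auto); intros; auto.
 - intros z [W K] [W' K'] [Hf1 Hf2] [c1 [a [? [? [? [? ?]]]]]]; simpl in *. exists c1, a; repeat split; auto.
 - intros [W K] [? [? ?]]; simpl in *. destruct (Base W K) as [c1 [a [c2 [? [? [? [? [? ?]]]]]]]]; auto.
   exists c2; split; auto. exists c1, a; auto.
 - destruct (cluster G C ((G->Prop)*(H->Prop)*(G->Prop))
     (fun p => tg_open (fst (fst p)) /\ fst (fst p) c2s /\ tg_open (snd (fst p)) /\ snd (fst p) h /\ compact (snd p))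
     (fun p q => (forall x, fst (fst q) x -> fst (fst p) x) /\ (forall y, snd (fst q) y -> snd (fst p) y) /\ (forall x, snd p x -> snd q x))
     (fun z p => exists c2 a, C c2 /\ fst (fst p) c2 /\ A a /\ ~ snd p a /\ snd (fst p) (phi (tg_mul (tg_mul z a) c2))) HC)
     as [c1s [Cc1s Hc1s]].
   + exists ((fun _ => True), (fun _ => True), (fun _ => False)). simpl.
     repeat split; try apply tg_open_full; try apply compact_empty.
   + intros [[N W] K] [[N' W'] K'] [? [? [? [? ?]]]] [? [? [? [? ?]]]]; simpl in *.
     exists ((fun x => N x /\ N' x), (fun y => W y /\ W' y), (fun x => K x \/ K' x)); simpl.
     split; [repeat split; auto; try apply tg_open_inter; auto; apply compact_union; auto|].
     split; repeat split; try (intros ? [? ?]; auto); intros; auto.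
   + intros z [[N W] K] [[N' W'] K'] [Hf1 [Hf2 Hf3]] [c2 [a [? [? [? [? ?]]]]]]; simpl in *. exists c2, a; repeat split; auto.
   + intros [[N W] K] [? [? [? [? ?]]]]; simpl in *.
     destruct (Hc2s N ltac:(auto) ltac:(auto) (W, K) ltac:(simpl; auto)) as [c2 [Cc2 [Nc2 [c1 [a [? [? [? [? ?]]]]]]]]]; simpl in *.
     exists c1; split; auto. exists c2, a; auto.
   + set (hp := tg_mul (tg_mul (tg_inv (phi c1s)) h) (tg_inv (phi c2s))).
     assert (Claim : forall W' Kc, tg_open W' -> W' hp -> compact Kc -> exists a, A a /\ ~ Kc a /\ W' (phi a)).
     { intros W' Kc HW' W'hp HKc.
       destruct (tg_mul_cont H W' _ _ HW' W'hp) as [V1 [V2 [HV1 [HV2 [V1x [V2y HV12]]]]]].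
       destruct (tg_mul_cont H V1 _ _ HV1 V1x) as [V3 [W [HV3 [HW [V3x [Wh HV3W]]]]]].
       destruct (Hc1s (fun u => V3 (tg_inv (phi u))) (Hc _ (tg_inv_cont H V3 HV3)) V3x
          ((fun u => V2 (tg_inv (phi u))), W, Kc) ltac:(simpl; repeat split; auto; apply (Hc _ (tg_inv_cont H V2 HV2))))
          as [c1 [Cc1 [N1c1 [c2 [a [Cc2 [N2c2 [Aa [nKa Wg]]]]]]]]]; simpl in *.
       exists a. split; [|split]; auto.
       specialize (HV12 _ _ (HV3W _ _ N1c1 Wg) N2c2).
       rewrite !Hhom in HV12. gsimpl. revert HV12. gsimpl. auto. }
     set (D := { t : (G->Prop)*(H->Prop)*G | compact (fst (fst t)) /\ tg_open (snd (fst t)) /\ snd (fst t) hp /\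
                 A (snd t) /\ ~ fst (fst t) (snd t) /\ snd (fst t) (phi (snd t)) }).
     set (le := fun d1 d2 : D => (forall x, fst (fst (proj1_sig d1)) x -> fst (fst (proj1_sig d2)) x) /\
                                (forall y, snd (fst (proj1_sig d2)) y -> snd (fst (proj1_sig d1)) y)).
     set (an := fun d : D => snd (proj1_sig d)).
     assert (mk : forall K W, compact K -> tg_open W -> W hp -> exists d : D, fst (fst (proj1_sig d)) = K /\ snd (fst (proj1_sig d)) = W).
     { intros K W HK HW Whp. destruct (Claim W K HW Whp HK) as [a [Aa [nKa Wa]]].
       exists (exist _ (K, W, a) (conj HK (conj HW (conj Whp (conj Aa (conj nKa Wa)))))). simpl; auto. }
     assert (Hdir : directed le).
     { split; [|split; [|split]].
       - destruct (mk _ _ (compact_empty G) (tg_open_full H) I) as [d _]. constructor. exact d.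
       - intro d. split; auto.
       - intros a b c [? ?] [? ?]. split; auto.
       - intros [[[K1 W1] a1] [? [? [? ?]]]] [[[K2 W2] a2] [? [? [? ?]]]]; simpl in *.
         destruct (mk (fun x => K1 x \/ K2 x) (fun y => W1 y /\ W2 y)) as [d [E1 E2]].
         + apply compact_union; auto.
         + apply tg_open_inter; auto.
         + auto.
         + exists d. unfold le; simpl; rewrite E1, E2. split; split; intros; tauto. }
     destruct (Hnet D le an Hdir) as [D' [le' [b [Hdir' [Hsub [Hnp _]]]]]].
     * intros [t Ht]; unfold an; simpl; tauto.
     * intros K HK. destruct (mk K (fun _ => True) HK (tg_open_full H) I) as [d0 [E1 _]].
       exists d0. intros [t Ht] [Hle _]. unfold an; simpl in *. intro Ka. destruct Ht as [_ [_ [_ [_ [nK _]]]]]. apply nK.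
       apply Hle. rewrite E1. exact Ka.
     * destruct Hsub as [hh [Hcof Hb]].
       assert (Hconv : net_conv H le' (fun d => phi (b d)) hp).
       { intros W HW Whp. destruct (mk _ W (compact_empty G) HW Whp) as [d0 [_ E2]].
         destruct (Hcof d0) as [d0' Hd0']. exists d0'. intros d' Hd'.
         destruct (Hd0' d' Hd') as [_ Hle]. rewrite Hb. unfold an.
         destruct (hh d') as [t Ht]; simpl in *. rewrite <- E2. apply Hle. tauto. }
       assert (Hup : forall x, Uplus G le' b x -> x = tg_one).
       { intros x Hx. apply Hinj. rewrite (hom_one G H phi Hhom). apply NNPP; intro Hne.
         assert (Hne' : tg_mul (tg_mul (tg_inv hp) (phi x)) hp <> tg_one).
         { intro E; apply Hne; exact (conj_one H _ _ E). }
         destruct (HH _ _ Hne') as [U1 [U2 [HU1 [HU2 [U1v [U2e Hd]]]]]].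
         destruct (tg_mul_cont H U1 _ _ HU1 U1v) as [V1 [V2 [HV1 [HV2 [V1x [V2y HV12]]]]]].
         destruct (tg_mul_cont H V1 _ _ HV1 V1x) as [V3 [V4 [HV3 [HV4 [V3x [V4y HV34]]]]]].
         destruct (Hconv (fun t => V3 (tg_inv t) /\ V2 t)) as [d1 Hd1].
         { apply tg_open_inter; auto. apply tg_inv_cont; auto. } { auto. }
         destruct (Hx (fun z => U2 (phi z)) (Hc _ HU2)) as [d2 Hd2].
         { rewrite (hom_one G H phi Hhom); auto. }
         destruct Hdir' as [_ [_ [Htr Hub]]]. destruct (Hub d1 d2) as [d3 [H13 H23]].
         specialize (Hd2 d3 H23). destruct (Hd1 d3 H13) as [A1 A2]. simpl in *.
         rewrite !Hhom, hom_inv in Hd2 by auto.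
         exact (Hd _ (HV12 _ _ (HV34 _ _ A1 V4y) A2) Hd2). }
       apply Hnp. intros F HF Hcov.
       assert (Hcl : forall z, closure G (Uplus G le' b) z -> z = tg_one).
       { intros z Hz. apply NNPP; intro Hne. destruct (HG _ _ Hne) as [U [V [HU [HV [Uz [Ve Hd]]]]]].
         destruct (Hz U HU Uz) as [y [Uy Hy]]. rewrite (Hup y Hy) in Uy. exact (Hd _ Uy Ve). }
       destruct (classic (exists z, closure G (Uplus G le' b) z)) as [[z Hz]|Hno].
       -- destruct (Hcov z Hz) as [U0 [FU0 U0z]]. exists (U0 :: nil). split.
          ++ intros U [<-|[]]; auto.
          ++ intros z' Hz'. exists U0. split; [left; auto|]. rewrite (Hcl z' Hz'), <- (Hcl z Hz). auto.
       -- exists nil. split; [intros ? []|]. intros z Hz; exfalso; eauto.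
Qed.

Theorem theorem5p1 (G H : TopGroup) (phi : G -> H) :
  qss G -> hausdorff H -> continuous phi -> group_hom phi ->
  (forall x y, phi x = phi y -> x = y) ->
  closed (fun y : H => exists x, y = phi x) /\
  (forall U : G -> Prop, tg_open U ->
     exists V : H -> Prop, tg_open V /\
       forall y, (exists x, U x /\ y = phi x) <-> (V y /\ exists x, y = phi x)).
Proof.
  intros Hq HH Hc Hhom Hinj. split.
  - unfold closed.
    assert (E : (fun y : H => ~ (exists x, y = phi x)) =
                (fun y => exists V, (tg_open V /\ forall z, V z -> ~ exists x, z = phi x) /\ V y)).
    { apply functional_extensionality; intro y; apply propositional_extensionality; split.
      - intro Hy. apply NNPP; intro Hn.
        destruct (key G H phi Hq HH Hc Hhom Hinj y (fun _ => True)) as [z Hz].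
        + intros W HW Wy. apply NNPP; intro Hw. apply Hn. exists W. split; [split; [exact HW|]|exact Wy].
          intros z Wz [x ->]. apply Hw. exists x; split; auto.
        + apply Hy. exists z. symmetry. exact (clus_eq G H phi _ z y HH Hc Hz).
      - intros [V [[_ HV] Vy]]. exact (HV y Vy). }
    rewrite E. apply tg_open_union. intros U [HU _]; exact HU.
  - intros U HU. exists (fun y => exists V, (tg_open V /\ forall x, V (phi x) -> U x) /\ V y). split.
    + apply tg_open_union. intros V [HV _]; exact HV.
    + intro y; split.
      * intros [x [Ux ->]]. split; [|exists x; reflexivity]. apply NNPP; intro Hn.
        destruct (key G H phi Hq HH Hc Hhom Hinj (phi x) (fun g => ~ U g)) as [z Hz].
        -- intros W HW Wx. apply NNPP; intro Hw. apply Hn. exists W. split; [split; [exact HW|]|exact Wx].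
           intros x' Wx'. apply NNPP; intro nU. apply Hw. exists x'; auto.
        -- assert (Ez : z = x) by exact (Hinj _ _ (clus_eq G H phi _ z (phi x) HH Hc Hz)).
           destruct (Hz U HU ltac:(rewrite Ez; exact Ux) (fun _ => True) (tg_open_full H) I) as [g [nUg [Ug _]]].
           exact (nUg Ug).
      * intros [[V [[HV HVU] Vy]] [x ->]]. exists x. split; [exact (HVU x Vy)|reflexivity].
Qed.
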